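(* Let $(x_n)$ be generated by (HPPA). Let ${\rm a},{\rm E}:\mathbb{N}\to\mathbb{N}$ be monotone functions satisfying (Q1) and (Q4) respectively, and let $\mathcal{E},\mathcal{D}\in\mathbb{N}$ satisfy $\mathcal{E}\geq 1+\sum_{i=0}^{{\rm E}(0)}\|e_i\|$ and $\mathcal{D}\geq\|x_0-p\|$ for some $p\in S$. Define $\xi(k):=\max\{{\rm a}(2(2\mathcal{D}+\mathcal{E})(k+1)-1),\ {\rm E}(2k+1)+1\}$. Then $$\forall k\in\mathbb{N}\ \forall n\geq\xi(k)\ \left(\|x_{n+1}-J_{\beta_n}(x_n)\|\leq\frac{1}{k+1}\right).$$
   Context: $X$ is a real Hilbert space, $\mathsf{A}:X\to 2^X$ a maximal monotone operator with zero set $S=\{x:0\in\mathsf{A}(x)\}$, assumed nonempty. For $\beta>0$, $J_\beta:=(Id+\beta\mathsf{A})^{-1}$ is the resolvent, a single-valued nonexpansive map with fixed point set $S$. Given $(\alpha_n)\subset\,]0,1[$, $(\beta_n)\subset(0,\infty)$, $(e_n)\subset X$, $x_0\in X$, (HPPA) is the sequence $x_{n+1}:=\alpha_n x_0+(1-\alpha_n)(J_{\beta_n}(x_n)+e_n)$. (Q1): $\forall k\,\forall n\geq{\rm a}(k)\ \alpha_n\leq\frac{1}{k+1}$. (Q4): $\forall k\,\forall n\ \sum_{i={\rm E}(k)+1}^{{\rm E}(k)+n}\|e_i\|\leq\frac{1}{k+1}$. Monotone means nondecreasing. *)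

(* Defs.v *)
From Stdlib Require Import Reals Lra.
Open Scope R_scope.

Record HilbertSpace := {
  hcar :> Type;
  hzero : hcar;
  hadd : hcar -> hcar -> hcar;
  hopp : hcar -> hcar;
  hscal : R -> hcar -> hcar;
  hinner : hcar -> hcar -> R;
  hadd_assoc : forall x y z, hadd x (hadd y z) = hadd (hadd x y) z;
  hadd_comm : forall x y, hadd x y = hadd y x;
  hadd_zero : forall x, hadd hzero x = x;
  hadd_opp : forall x, hadd (hopp x) x = hzero;
  hscal_assoc : forall a b x, hscal a (hscal b x) = hscal (a * b) x;
  hscal_one : forall x, hscal 1 x = x;
  hscal_distr_v : forall a x y, hscal a (hadd x y) = hadd (hscal a x) (hscal a y);
  hscal_distr_s : forall a b x, hscal (a + b) x = hadd (hscal a x) (hscal b x);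
  hinner_sym : forall x y, hinner x y = hinner y x;
  hinner_add_l : forall x y z, hinner (hadd x y) z = hinner x z + hinner y z;
  hinner_scal_l : forall a x y, hinner (hscal a x) y = a * hinner x y;
  hinner_pos : forall x, 0 <= hinner x x;
  hinner_def : forall x, hinner x x = 0 -> x = hzero;
  hcomplete : forall u : nat -> hcar,
    (forall eps, 0 < eps -> exists N, forall m n, (N <= m)%nat -> (N <= n)%nat ->
        sqrt (hinner (hadd (u m) (hopp (u n))) (hadd (u m) (hopp (u n)))) < eps) ->
    exists l, forall eps, 0 < eps -> exists N, forall n, (N <= n)%nat ->
        sqrt (hinner (hadd (u n) (hopp l)) (hadd (u n) (hopp l))) < eps
}.

Arguments hzero {h}.
Arguments hadd {h} _ _.
Arguments hopp {h} _.
Arguments hscal {h} _ _.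
Arguments hinner {h} _ _.

Definition hsub {X : HilbertSpace} (x y : X) : X := hadd x (hopp y).
Definition hnorm {X : HilbertSpace} (x : X) : R := sqrt (hinner x x).

(* Set-valued operators A : X -> 2^X, represented by their graph: A x u means u ∈ A(x). *)
Definition monotone_op {X : HilbertSpace} (A : X -> X -> Prop) : Prop :=
  forall x y u v, A x u -> A y v -> 0 <= hinner (hsub x y) (hsub u v).

Definition maximal_monotone {X : HilbertSpace} (A : X -> X -> Prop) : Prop :=
  monotone_op A /\
  forall B : X -> X -> Prop, monotone_op B -> (forall x u, A x u -> B x u) ->
    forall x u, B x u -> A x u.

(* J is the resolvent (Id + beta A)^{-1}:  for every x,  x ∈ J x + beta A(J x). *)
Definition is_resolvent {X : HilbertSpace} (A : X -> X -> Prop) (beta : R) (J : X -> X) : Prop :=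
  forall x, A (J x) (hscal (/ beta) (hsub x (J x))).

Fixpoint sum_from (f : nat -> R) (m len : nat) : R :=
  match len with
  | O => 0
  | S l => f m + sum_from f (S m) l
  end.

Definition HPPA {X : HilbertSpace} (J : R -> X -> X) (alpha beta : nat -> R)
  (e : nat -> X) (x0 : X) (x : nat -> X) : Prop :=
  x O = x0 /\
  forall n, x (S n) = hadd (hscal (alpha n) x0)
                           (hscal (1 - alpha n) (hadd (J (beta n) (x n)) (e n))).

Definition nat_monotone (f : nat -> nat) : Prop := forall m n, (m <= n)%nat -> (f m <= f n)%nat.

(* Main.v *)
Require Import Defs.
From Stdlib Require Import Reals Lra Lia.
Open Scope R_scope.

Section H.
Context {X : HilbertSpace}.

Lemma ip_zero_l (z : X) : hinner hzero z = 0.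
Proof.
  assert (H := hinner_add_l X hzero hzero z). rewrite hadd_zero in H. lra.
Qed.
Lemma ip_opp_l (x z : X) : hinner (hopp x) z = - hinner x z.
Proof.
  assert (H := hinner_add_l X (hopp x) x z). rewrite hadd_opp, ip_zero_l in H. lra.
Qed.
Lemma ip_add_l (x y z : X) : hinner (hadd x y) z = hinner x z + hinner y z.
Proof. apply hinner_add_l. Qed.
Lemma ip_scal_l a (x y : X) : hinner (hscal a x) y = a * hinner x y.
Proof. apply hinner_scal_l. Qed.
Lemma ip_zero_r (z : X) : hinner z hzero = 0.
Proof. rewrite hinner_sym; apply ip_zero_l. Qed.
Lemma ip_opp_r (x z : X) : hinner z (hopp x) = - hinner z x.
Proof. rewrite hinner_sym, ip_opp_l, hinner_sym; auto. Qed.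
Lemma ip_add_r (x y z : X) : hinner z (hadd x y) = hinner z x + hinner z y.
Proof. rewrite hinner_sym, ip_add_l, (hinner_sym _ x), (hinner_sym _ y); auto. Qed.
Lemma ip_scal_r a (x y : X) : hinner y (hscal a x) = a * hinner y x.
Proof. rewrite hinner_sym, ip_scal_l, hinner_sym; auto. Qed.

Lemma hext (w w' : X) : (forall z, hinner w z = hinner w' z) -> w = w'.
Proof.
  intros H.
  assert (E : hinner (hsub w w') (hsub w w') = 0).
  { unfold hsub. rewrite ip_add_l, ip_opp_l, !H. lra. }
  apply hinner_def in E. unfold hsub in E.
  assert (T : hadd (hadd w (hopp w')) w' = w).
  { rewrite <- hadd_assoc, hadd_opp, hadd_comm, hadd_zero. auto. }
  rewrite E, hadd_zero in T. auto.
Qed.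

Lemma hnorm_nonneg (u : X) : 0 <= hnorm u.
Proof. apply sqrt_pos. Qed.
Lemma hnorm_sq (u : X) : hnorm u * hnorm u = hinner u u.
Proof. unfold hnorm. apply sqrt_sqrt, hinner_pos. Qed.

Lemma hnorm_scal a (u : X) : hnorm (hscal a u) = Rabs a * hnorm u.
Proof.
  unfold hnorm. rewrite ip_scal_l, ip_scal_r, <- Rmult_assoc.
  rewrite sqrt_mult; [| nra | apply hinner_pos].
  rewrite <- sqrt_Rsqr_abs. reflexivity.
Qed.

Lemma cauchy_schwarz (u v : X) : hinner u v <= hnorm u * hnorm v.
Proof.
  set (a := hinner u u). set (b := hinner u v). set (c := hinner v v).
  assert (Ha : 0 <= a) by apply hinner_pos.
  assert (Hc : 0 <= c) by apply hinner_pos.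
  assert (Hq : b * b <= a * c).
  { destruct (Req_dec c 0) as [Hc0|Hc0].
    - assert (v = hzero) by (apply hinner_def; exact Hc0).
      unfold b; subst v. rewrite ip_zero_r. nra.
    - assert (P := hinner_pos X (hadd (hscal c u) (hopp (hscal b v)))).
      rewrite !ip_add_l, !ip_add_r, !ip_opp_l, !ip_opp_r, !ip_scal_l, !ip_scal_r in P.
      rewrite (hinner_sym _ v u) in P. fold a b c in P.
      assert (0 <= c * (a * c - b * b)) by nra.
      assert (0 < c) by lra. nra. }
  unfold hnorm. fold a c. rewrite <- sqrt_mult by lra.
  apply Rle_trans with (Rabs b). apply Rle_abs.
  rewrite <- sqrt_Rsqr_abs. apply sqrt_le_1_alt. unfold Rsqr. lra.
Qed.

Lemma hnorm_add (u v : X) : hnorm (hadd u v) <= hnorm u + hnorm v.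
Proof.
  assert (CS := cauchy_schwarz u v).
  assert (Hu := hnorm_nonneg u). assert (Hv := hnorm_nonneg v).
  assert (Hs := hnorm_sq u). assert (Ht := hnorm_sq v).
  assert (E : hinner (hadd u v) (hadd u v) = hinner u u + 2 * hinner u v + hinner v v).
  { rewrite !ip_add_l, !ip_add_r, (hinner_sym _ v u). ring. }
  unfold hnorm at 1. rewrite E.
  rewrite <- (sqrt_square (hnorm u + hnorm v)) by lra.
  apply sqrt_le_1_alt. nra.
Qed.

Lemma hnorm_eq (u v : X) : hinner u u = hinner v v -> hnorm u = hnorm v.
Proof. unfold hnorm; intros ->; auto. Qed.

End H.

Lemma sum_from_S f m l : sum_from f m (S l) = sum_from f m l + f (m + l)%nat.
Proof.
  revert m; induction l; intros m; simpl.
  - rewrite Nat.add_0_r; ring.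
  - simpl in IHl. rewrite IHl. replace (S m + l)%nat with (m + S l)%nat by lia. ring.
Qed.
Lemma sum_from_app f m l1 l2 : sum_from f m (l1 + l2) = sum_from f m l1 + sum_from f (m + l1) l2.
Proof.
  revert m; induction l1; intros m; simpl.
  - rewrite Nat.add_0_r; ring.
  - rewrite IHl1. replace (S m + l1)%nat with (m + S l1)%nat by lia. ring.
Qed.
Lemma sum_from_nonneg f m l : (forall i, 0 <= f i) -> 0 <= sum_from f m l.
Proof.
  intros Hf; revert m; induction l; intros m; simpl. lra. specialize (IHl (S m)); specialize (Hf m); lra.
Qed.
Theorem mainTheorem8
  (X : HilbertSpace) (A : X -> X -> Prop) (HA : maximal_monotone A)
  (J : R -> X -> X) (HJ : forall b, 0 < b -> is_resolvent A b (J b))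
  (alpha beta : nat -> R) (e : nat -> X) (x0 : X) (x : nat -> X)
  (Halpha : forall n, 0 < alpha n < 1) (Hbeta : forall n, 0 < beta n)
  (Hx : HPPA J alpha beta e x0 x)
  (a E : nat -> nat) (Ha_mon : nat_monotone a) (HE_mon : nat_monotone E)
  (HQ1 : forall k n, (a k <= n)%nat -> alpha n <= 1 / (INR k + 1))
  (HQ4 : forall k n, sum_from (fun i => hnorm (e i)) (E k + 1) n <= 1 / (INR k + 1))
  (calE calD : nat)
  (HcalE : INR calE >= 1 + sum_from (fun i => hnorm (e i)) 0 (E 0%nat + 1))
  (p : X) (Hp : A p hzero) (HcalD : INR calD >= hnorm (hsub x0 p)) :
  let xi := fun k : nat =>
    Nat.max (a (2 * (2 * calD + calE) * (k + 1) - 1)%nat) (E (2 * k + 1)%nat + 1)%nat in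
  forall k n : nat, (xi k <= n)%nat ->
    hnorm (hsub (x (S n)) (J (beta n) (x n))) <= 1 / (INR k + 1).

Proof.
  intros xi k n Hn.
  destruct Hx as [Hx0 Hxs].
  set (f := fun i => hnorm (e i)).
  assert (Hf : forall i, 0 <= f i) by (intros; apply hnorm_nonneg).
  set (D := INR calD). set (C := INR calE).
  assert (HJp : forall b y, 0 < b -> hnorm (hsub (J b y) p) <= hnorm (hsub y p)).
  { intros b y Hb.
    destruct HA as [Hmon _].
    assert (M := Hmon _ _ _ _ (HJ b Hb y) Hp).
    set (z := J b y) in *.
    assert (G : 0 <= hinner (hsub z p) (hsub y z)).
    { unfold hsub in M |- *.
      rewrite !ip_add_r, ip_opp_r, ip_zero_r, !ip_scal_r, !ip_add_r, ip_opp_r in M.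
      rewrite ip_add_r, ip_opp_r.
      assert (0 < / b) by (apply Rinv_0_lt_compat; auto).
      nra. }
    assert (G2 : hinner (hsub z p) (hsub y p) = hinner (hsub z p) (hsub y z) + hinner (hsub z p) (hsub z p)).
    { unfold hsub. rewrite !ip_add_r, !ip_opp_r. ring. }
    assert (CS := cauchy_schwarz (hsub z p) (hsub y p)).
    rewrite <- hnorm_sq in G2.
    assert (N1 := hnorm_nonneg (hsub z p)). assert (N2 := hnorm_nonneg (hsub y p)).
    destruct (Req_dec (hnorm (hsub z p)) 0) as [Z|Z]. lra.
    nra. }
  assert (Hs : forall m, sum_from f 0 m <= C).
  { intros m.
    assert (A1 := sum_from_app f 0 m (E 0%nat + 1)).
    assert (A2 := sum_from_app f 0 (E 0%nat + 1) m).
    replace (m + (E 0%nat + 1))%nat with (E 0%nat + 1 + m)%nat in A1 by lia.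
    assert (S1 := sum_from_nonneg f (0 + m) (E 0%nat + 1) Hf).
    assert (Q := HQ4 0%nat m). simpl in Q, A2. fold f in Q.
    fold f in HcalE. replace (1 / (0 + 1)) with 1 in Q by field.
    unfold C; lra. }
  assert (Hb : forall m, hnorm (hsub (x m) p) <= D + sum_from f 0 m).
  { induction m.
    - rewrite Hx0. simpl. unfold D; lra.
    - rewrite sum_from_S. simpl Nat.add.
      assert (V : hsub (x (S m)) p = hadd (hscal (alpha m) (hsub x0 p))
                    (hscal (1 - alpha m) (hadd (hsub (J (beta m) (x m)) p) (e m)))).
      { rewrite Hxs. apply hext; intro z. unfold hsub.
        repeat rewrite ?ip_add_l, ?ip_scal_l, ?ip_opp_l. ring. }
      rewrite V.
      specialize (Halpha m). specialize (HJp (beta m) (x m) (Hbeta m)).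
      eapply Rle_trans. apply hnorm_add.
      rewrite !hnorm_scal, !Rabs_right by lra.
      assert (T := hnorm_add (hsub (J (beta m) (x m)) p) (e m)).
      assert (0 <= sum_from f 0 m) by (apply sum_from_nonneg; auto).
      assert (Hfm := Hf m). unfold f in *.
      assert (hnorm (hsub x0 p) <= D) by (unfold D; lra).
      assert (N := hnorm_nonneg (hadd (hsub (J (beta m) (x m)) p) (e m))).
      nra. }
  assert (HC1 : (1 <= calE)%nat).
  { assert (0 <= sum_from f 0 (E 0%nat + 1)) by (apply sum_from_nonneg; auto).
    fold f in HcalE. apply INR_le. simpl. lra. }
  unfold xi in Hn.
  assert (Hn1 := Nat.max_lub_l _ _ _ Hn). assert (Hn2 := Nat.max_lub_r _ _ _ Hn).
  set (K := (2 * (2 * calD + calE) * (k + 1))%nat) in *.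
  assert (HK : INR (K - 1) + 1 = 2 * (2 * D + C) * (INR k + 1)).
  { rewrite minus_INR by (unfold K; lia). unfold K. repeat rewrite ?mult_INR, ?plus_INR. replace (INR 2) with 2 by (simpl; ring). replace (INR 1) with 1 by reflexivity. unfold D, C. ring. }
  assert (Hal := HQ1 _ _ Hn1). rewrite HK in Hal.
  assert (He := HQ4 (2 * k + 1)%nat (n - (E (2 * k + 1)%nat + 1) + 1)%nat).
  assert (He2 : f n <= sum_from f (E (2 * k + 1)%nat + 1) (n - (E (2 * k + 1)%nat + 1) + 1)%nat).
  { replace (n - (E (2 * k + 1)%nat + 1) + 1)%nat with (S (n - (E (2 * k + 1)%nat + 1))) by lia.
    rewrite sum_from_S. replace (E (2 * k + 1)%nat + 1 + (n - (E (2 * k + 1)%nat + 1)))%nat with n by lia.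
    assert (0 <= sum_from f (E (2 * k + 1)%nat + 1) (n - (E (2 * k + 1)%nat + 1))) by (apply sum_from_nonneg; auto).
    lra. }
  fold f in He.
  replace (INR (2 * k + 1) + 1) with (2 * (INR k + 1)) in He by (rewrite plus_INR, mult_INR; replace (INR 2) with 2 by (simpl; ring); replace (INR 1) with 1 by reflexivity; ring).
  assert (V : hsub (x (S n)) (J (beta n) (x n)) =
              hadd (hscal (alpha n) (hsub x0 (J (beta n) (x n)))) (hscal (1 - alpha n) (e n))).
  { rewrite Hxs. apply hext; intro z. unfold hsub.
    repeat rewrite ?ip_add_l, ?ip_scal_l, ?ip_opp_l. ring. }
  rewrite V.
  specialize (Halpha n).
  eapply Rle_trans. apply hnorm_add.
  rewrite !hnorm_scal, !Rabs_right by lra.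
  assert (W : hnorm (hsub x0 (J (beta n) (x n))) <= 2 * D + C).
  { assert (Eq : hsub x0 (J (beta n) (x n)) = hadd (hsub x0 p) (hscal (-1) (hsub (J (beta n) (x n)) p))).
    { apply hext; intro z; unfold hsub.
      repeat rewrite ?ip_add_l, ?ip_scal_l, ?ip_opp_l. ring. }
    rewrite Eq. eapply Rle_trans. apply hnorm_add.
    rewrite hnorm_scal. replace (Rabs (-1)) with 1 by (unfold Rabs; destruct (Rcase_abs (-1)); lra).
    specialize (HJp (beta n) (x n) (Hbeta n)). specialize (Hb n). specialize (Hs n).
    unfold D in *. lra. }
  assert (Dp : 0 <= D) by apply pos_INR.
  assert (C1 : 1 <= C) by (unfold C; apply (le_INR 1); auto).
  assert (kp : 0 <= INR k) by apply pos_INR.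
  assert (A1 : alpha n * (2 * D + C) <= 1 / (2 * (2 * D + C) * (INR k + 1)) * (2 * D + C)) by nra.
  replace (1 / (2 * (2 * D + C) * (INR k + 1)) * (2 * D + C)) with (1 / (2 * (INR k + 1))) in A1
    by (field; lra).
  assert (Hen := Hf n).
  assert (N0 := hnorm_nonneg (hsub x0 (J (beta n) (x n)))).
  unfold f in He2, Hen.
  assert (1 / (INR k + 1) = 1 / (2 * (INR k + 1)) + 1 / (2 * (INR k + 1))) by (field; lra).
  assert (alpha n * hnorm (hsub x0 (J (beta n) (x n))) <= alpha n * (2 * D + C)) by (apply Rmult_le_compat_l; lra).
  assert ((1 - alpha n) * hnorm (e n) <= hnorm (e n)) by nra.
  unfold f in *. lra.
Qed.
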